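(* Let $\alpha,\beta\in\mathbb{C}\smallsetminus\{0,1\}$. The morphism $\nu_{\alpha,\beta}\colon S_{\alpha,\beta}\to\mathbb{A}^2_{\mathbb{C}}$, $(x,y,u,v)\mapsto(x+u,\, ix-iu)$, induces an isomorphism $S_{\alpha,\beta}\xrightarrow{\sim} W_{\alpha,\beta}$, i.e. there is an isomorphism $S_{\alpha,\beta}\to W_{\alpha,\beta}$ whose composition with the blow-down map $W_{\alpha,\beta}\to\mathbb{A}^2_{\mathbb{C}}$ equals $\nu_{\alpha,\beta}$ (on the preimage of the affine plane).
   Context: $S_{\alpha,\beta}\subset\mathbb{A}^4_{\mathbb{C}}=\operatorname{Spec}\mathbb{C}[x,y,u,v]$ is the affine surface defined by $yu=x(x-1)(x-\alpha)$, $xv=u(u-1)(u-\beta)$, $yv=(x-1)(x-\alpha)(u-1)(u-\beta)$. $Y_{\alpha,\beta}$ is the blow-up of $\mathbb{P}^2_{\mathbb{C}}$ (coordinates $[x:y:z]$, affine chart $z=1$ with coordinates $(x,y)$) in the five points $(0,0)$, $(1,i)$, $(\alpha,\alpha i)$, $(1,-i)$, $(\beta,-\beta i)$ of $\mathbb{A}^2_{\mathbb{C}}$. Let $L_z$, $L_{x+iy}$, $L_{x-iy}$ denote the strict transforms in $Y_{\alpha,\beta}$ of the lines $z=0$, $x+iy=0$, $x-iy=0$. Then $W_{\alpha,\beta}=Y_{\alpha,\beta}\smallsetminus(L_z\cup L_{x+iy}\cup L_{x-iy})$; equivalently, $W_{\alpha,\beta}$ is the blow-up of $\mathbb{A}^2_{\mathbb{C}}$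 in these five points with the strict transforms of the lines $x+iy=0$ and $x-iy=0$ removed. *)

(* Defs.v *)
(* The base field C is R[i] for R : realType
   (every realType is a complete archimedean ordered field, i.e. R ~ the reals,
   so R[i] ~ the complex numbers). *)
From HB Require Import structures.
From mathcomp Require Import all_boot all_order all_algebra.
From mathcomp Require Import reals.
From mathcomp Require Import complex.
Set Implicit Arguments. Unset Strict Implicit. Unset Printing Implicit Defensive.
Import Order.TTheory GRing.Theory Num.Theory.
Local Open Scope ring_scope.

Section Geometry.
Variable R : realType.

Definition CC := R[i].
Definition iC : CC := Complex 0 1.

(* Ambient spaces  A^n x (P^1)^m.  A point is represented by an affine *)
(* part ('I_n -> CC) and homogeneous coordinates (s_j0, s_j1) for each *)
(* P^1 factor j; a representative is valid when no pair is (0,0), and *)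
(* two representatives are the same point when they differ by scaling  *)
(* each pair by a nonzero scalar.                                      *)
Definition pt (n m : nat) := (('I_n -> CC) * ('I_m -> CC * CC))%type.

Definition valid n m (p : pt n m) : Prop :=
  forall j : 'I_m, (p.2 j).1 <> 0 \/ (p.2 j).2 <> 0.

Definition scale n m (lam : 'I_m -> CC) (p : pt n m) : pt n m :=
  (p.1, fun j => (lam j * (p.2 j).1, lam j * (p.2 j).2)).

Definition same n m (p q : pt n m) : Prop :=
  exists lam : 'I_m -> CC, (forall j, lam j <> 0) /\ q = scale lam p.

Inductive polyfun n m : (pt n m -> CC) -> Prop :=
| pf_const (c : CC) : polyfun (fun _ => c)
| pf_aff (i : 'I_n) : polyfun (fun p => p.1 i)
| pf_proj0 (j : 'I_m) : polyfun (fun p => (p.2 j).1)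
| pf_proj1 (j : 'I_m) : polyfun (fun p => (p.2 j).2)
| pf_add f g : polyfun f -> polyfun g -> polyfun (fun p => f p + g p)
| pf_mul f g : polyfun f -> polyfun g -> polyfun (fun p => f p * g p).

Definition homog n m (d : 'I_m -> nat) (f : pt n m -> CC) : Prop :=
  forall lam : 'I_m -> CC, (forall j, lam j <> 0) ->
    forall p, f (scale lam p) = (\prod_(j < m) lam j ^+ d j) * f p.

Definition mhpoly n m (d : 'I_m -> nat) (f : pt n m -> CC) : Prop :=
  polyfun f /\ homog d f.

Definition zclosure n m (A : pt n m -> Prop) : pt n m -> Prop :=
  fun p => valid p /\
    forall (d : 'I_m -> nat) (g : pt n m -> CC), mhpoly d g ->
      (forall q, valid q -> A q -> g q = 0) -> g p = 0.

(* Morphisms between locally closed subsets X of A^n x (P^1)^m and Y  *)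
(* of A^n' x (P^1)^m' (given as predicates on representatives).       *)
Definition morphism n m n' m' (X : pt n m -> Prop) (Y : pt n' m' -> Prop)
    (F : pt n m -> pt n' m') : Prop :=
  (forall p, valid p -> X p -> valid (F p) /\ Y (F p)) /\
  (forall p q, valid p -> X p -> same p q -> same (F p) (F q)) /\
  (forall p, valid p -> X p ->
     exists (d : 'I_m -> nat) (h : pt n m -> CC) (g : 'I_n' -> pt n m -> CC)
            (e : 'I_m' -> 'I_m -> nat) (a b : 'I_m' -> pt n m -> CC),
       mhpoly d h /\ h p <> 0 /\
       (forall i, mhpoly d (g i)) /\
       (forall j, mhpoly (e j) (a j) /\ mhpoly (e j) (b j)) /\
       (forall j, a j p <> 0 \/ b j p <> 0) /\
       (forall q, valid q -> X q -> h q <> 0 ->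
          (forall j, a j q <> 0 \/ b j q <> 0) ->
          same (F q) (fun i => g i q / h q, fun j => (a j q, b j q)))).

Definition isomorphism n m n' m' (X : pt n m -> Prop) (Y : pt n' m' -> Prop)
    (F : pt n m -> pt n' m') : Prop :=
  morphism X Y F /\
  exists G : pt n' m' -> pt n m,
    [/\ morphism Y X G,
        forall p, valid p -> X p -> same (G (F p)) p &
        forall q, valid q -> Y q -> same (F (G q)) q].

(* The surface S_{alpha,beta} in A^4 (coordinates x,y,u,v = 0,1,2,3). *)
Definition S_ab (alpha beta : CC) : pt 4 0 -> Prop := fun p =>
  let x := p.1 0%R in let y := p.1 1%R in
  let u := p.1 2%R in let v := p.1 3%R in
  [/\ y * u = x * (x - 1) * (x - alpha),
      x * v = u * (u - 1) * (u - beta) &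
      y * v = (x - 1) * (x - alpha) * (u - 1) * (u - beta)].

Definition nu_ab (p : pt 4 0) : CC * CC :=
  (p.1 0%R + p.1 2%R, iC * p.1 0%R - iC * p.1 2%R).

Definition centre (alpha beta : CC) (k : 'I_5) : CC * CC :=
  match val k with
  | 0 => (0, 0)
  | 1 => (1, iC)
  | 2 => (alpha, alpha * iC)
  | 3 => (1, - iC)
  | _ => (beta, - (beta * iC))
  end.

(* The blow-up of A^2 (coordinates 0 = x, 1 = y) in the five centres,
   as the closed subset of A^2 x (P^1)^5 given by
   (x - p_k) s_k1 = (y - q_k) s_k0 for each centre (p_k, q_k);
   the blow-down map is the projection (x, y, s) |-> (x, y). *)
Definition Bl_ab (alpha beta : CC) : pt 2 5 -> Prop := fun w =>
  valid w /\
  forall k : 'I_5,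
    (w.1 0%R - (centre alpha beta k).1) * (w.2 k).2
    = (w.1 1%R - (centre alpha beta k).2) * (w.2 k).1.

Definition blowdown (w : pt 2 5) : CC * CC := (w.1 0%R, w.1 1%R).

Definition strict_transform (alpha beta : CC) (l : CC * CC -> CC) : pt 2 5 -> Prop :=
  zclosure (fun w => Bl_ab alpha beta w /\ l (blowdown w) = 0 /\
                     forall k, blowdown w <> centre alpha beta k).

Definition W_ab (alpha beta : CC) : pt 2 5 -> Prop := fun w =>
  Bl_ab alpha beta w /\
  ~ strict_transform alpha beta (fun z => z.1 + iC * z.2) w /\
  ~ strict_transform alpha beta (fun z => z.1 - iC * z.2) w.

End Geometry.

(* Main.v *)
Require Import Defs.
From HB Require Import structures.
From mathcomp Require Import all_boot all_order all_algebra.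
From mathcomp Require Import reals complex.
From mathcomp Require Import ring.
From Stdlib Require Import FunctionalExtensionality.
Import Order.TTheory GRing.Theory Num.Theory.
Local Open Scope ring_scope.

Section Main.
Variable R : realType.
Local Notation C := (CC R).
Local Notation i := (iC R).

Lemma i2 : i * i = -1.
Proof.
rewrite /iC; apply/eqP; rewrite eq_complex /=.
by rewrite !mul0r !mulr1 !mulr0 ?add0r ?addr0 ?sub0r ?subr0 ?oppr0 !eqxx.
Qed.

Lemma i_neq0 : i != 0.
Proof.
apply/negP => /eqP h; have := i2; rewrite h mul0r => /eqP.
by rewrite eq_sym oppr_eq0 oner_eq0.
Qed.

Lemma two_neq0 : (2 : C) != 0. Proof. by rewrite pnatr_eq0. Qed.
Definition half : C := 2^-1.
Lemma half2 : 2 * half = 1. Proof. by rewrite /half divff // two_neq0. Qed.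

Lemma pf_opp n m (f : pt R n m -> C) : polyfun f -> polyfun (fun p => - f p).
Proof.
move=> H; have -> : (fun p => - f p) = (fun p => (fun _ => -1) p * f p).
  by apply: functional_extensionality => p; rewrite mulN1r.
by apply: pf_mul => //; apply: pf_const.
Qed.

Ltac pf := repeat first [ apply pf_const | apply pf_aff | apply pf_proj0
  | apply pf_proj1 | apply pf_add | apply pf_mul | apply pf_opp ].

Definition dz : 'I_5 -> nat := fun _ => 0%N.
Definition dl (k : 'I_5) : 'I_5 -> nat := fun j => nat_of_bool (j == k).
Definition dadd (d1 d2 : 'I_5 -> nat) : 'I_5 -> nat := fun j => (d1 j + d2 j)%N.

Lemma prod_dz (lam : 'I_5 -> C) : \prod_(j < 5) lam j ^+ dz j = 1.
Proof. by rewrite big1 // => j _; rewrite expr0. Qed.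

Lemma prod_dl (lam : 'I_5 -> C) k : \prod_(j < 5) lam j ^+ dl k j = lam k.
Proof.
rewrite (bigD1 k) //= big1 ?mulr1 /dl ?eqxx ?expr1 // => j /negbTE ->.
by rewrite expr0.
Qed.

Lemma prod_dadd (lam : 'I_5 -> C) d1 d2 :
  \prod_(j < 5) lam j ^+ dadd d1 d2 j =
  (\prod_(j < 5) lam j ^+ d1 j) * \prod_(j < 5) lam j ^+ d2 j.
Proof. by rewrite -big_split /=; apply: eq_bigr => j _; rewrite exprD. Qed.

Lemma hm_mul n d1 d2 (f g : pt R n 5 -> C) :
  homog d1 f -> homog d2 g -> homog (dadd d1 d2) (fun p => f p * g p).
Proof.
move=> hf hg lam hl p; rewrite hf // hg // prod_dadd; ring.
Qed.

Lemma hm_mul0l n d (f g : pt R n 5 -> C) :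
  homog dz f -> homog d g -> homog d (fun p => f p * g p).
Proof.
move=> hf hg lam hl p; rewrite hf // hg // prod_dz; ring.
Qed.

Lemma mh_mul n d1 d2 (f g : pt R n 5 -> C) :
  mhpoly d1 f -> mhpoly d2 g -> mhpoly (dadd d1 d2) (fun p => f p * g p).
Proof. by case=> ? ? [] ? ?; split; [apply: pf_mul | apply: hm_mul]. Qed.

Lemma mh_mul0l n d (f g : pt R n 5 -> C) :
  mhpoly dz f -> mhpoly d g -> mhpoly d (fun p => f p * g p).
Proof. by case=> ? ? [] ? ?; split; [apply: pf_mul | apply: hm_mul0l]. Qed.

Lemma mh0 n (d : 'I_0 -> nat) (f : pt R n 0 -> C) : polyfun f -> mhpoly d f.
Proof.
move=> H; split => // lam _ p; rewrite big_ord0 mul1r.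
congr f; case: p => p1 p2; rewrite /scale /=; congr pair.
by apply: functional_extensionality => -[].
Qed.

Definition nzp (P : C * C) := P.1 <> 0 \/ P.2 <> 0.
Definition cross (P Q : C * C) := P.1 * Q.2 - P.2 * Q.1.
Definition rat (P Q : C * C) := if P.1 != 0 then Q.1 / P.1 else Q.2 / P.2.

Lemma prop_pair P Q : nzp P -> nzp Q -> cross P Q = 0 ->
  rat P Q != 0 /\ Q = (rat P Q * P.1, rat P Q * P.2).
Proof.
case: P Q => [a b] [c d]; rewrite /nzp /cross /rat /= => hP hQ /eqP.
rewrite subr_eq0 => /eqP hc.
have [a0|a0] := eqVneq a 0.
  have b0 : b != 0 by apply/eqP; case: hP.
  move: hc; rewrite a0 mul0r => /esym/eqP; rewrite mulf_eq0 (negbTE b0) /= => /eqP c0.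
  have d0 : d != 0 by apply/eqP => d0; case: hQ; apply; rewrite ?c0 ?d0.
     split; first by rewrite mulf_neq0 ?invr_eq0.
  by rewrite c0 mulr0 divfK.
have c0 : c != 0.
  apply/eqP => c0; move: hc; rewrite c0 mulr0 => /eqP; rewrite mulf_eq0 (negbTE a0) /=.
  by move=> /eqP d0; case: hQ.
rewrite /=; split; first by rewrite mulf_neq0 ?invr_eq0.
congr pair; first by rewrite divfK.
by apply: (mulfI a0); rewrite hc; field.
Qed.

Lemma same_intro n m (p q : pt R n m) : p.1 = q.1 -> (forall j, nzp (p.2 j)) ->
  (forall j, nzp (q.2 j)) -> (forall j, cross (p.2 j) (q.2 j) = 0) -> same p q.
Proof.
move=> h1 hp hq hc; exists (fun j => rat (p.2 j) (q.2 j)); split.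
  by move=> j; apply/eqP; case: (prop_pair _ _ (hp j) (hq j) (hc j)).
case: p q h1 hp hq hc => [p1 p2] [q1 q2] /= -> hp hq hc; rewrite /scale /=.
congr pair; apply: functional_extensionality => j.
by case: (prop_pair _ _ (hp j) (hq j) (hc j)).
Qed.

Lemma same_refl n m (p : pt R n m) : same p p.
Proof.
exists (fun _ => 1); split => [j|]; first by apply/eqP; rewrite oner_eq0.
case: p => p1 p2; rewrite /scale /=; congr pair.
by apply: functional_extensionality => j; rewrite !mul1r; case: (p2 j).
Qed.

Definition sg0 (s : C * C) := s.1 - i * s.2.
Definition sg1 (s : C * C) := s.1 + i * s.2.
Definition Tm (a b : C) : C * C := (a + b, i * (a - b)).

Lemma sg0T a b : sg0 (Tm a b) = 2 * a.
Proof. have h := i2; rewrite /sg0 /Tm /=; ring: h. Qed.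
Lemma sg1T a b : sg1 (Tm a b) = 2 * b.
Proof. have h := i2; rewrite /sg1 /Tm /=; ring: h. Qed.

Lemma cross_sg P Q : sg0 P * sg1 Q - sg1 P * sg0 Q = (2 * i) * cross P Q.
Proof. have h := i2; rewrite /sg0 /sg1 /cross; ring: h. Qed.

Lemma nzp_sg P : nzp P <-> (sg0 P != 0 \/ sg1 P != 0).
Proof.
have h := i2; have h2 := half2.
case: P => a b; rewrite /nzp /sg0 /sg1 /=.
have ea : a = ((a - i * b) + (a + i * b)) * half by ring: h2.
have eb : b = ((a - i * b) - (a + i * b)) * half * i by ring: h h2.
split.
  move=> hP; case: (eqVneq (a - i * b) 0) => [e0|]; last by left.
  case: (eqVneq (a + i * b) 0) => [e1|]; last by right.
  by case: hP; [rewrite ea e0 e1|rewrite eb e0 e1]; rewrite ?subrr ?addr0 !mul0r.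
case: (eqVneq a 0) => [a0|/eqP]; last by left.
case: (eqVneq b 0) => [b0|/eqP]; last by right.
by rewrite a0 b0 mulr0 subrr addr0 eqxx; case.
Qed.

Lemma nzp_Tm a b : nzp (a, b) -> nzp (Tm a b).
Proof.
move=> hP; apply/nzp_sg; rewrite sg0T sg1T.
by case: hP => /= /eqP h; [left|right]; rewrite mulf_neq0 // two_neq0.
Qed.

Lemma crossT a b Q : a * sg1 Q = b * sg0 Q -> cross (Tm a b) Q = 0.
Proof.
move=> h; apply: (mulfI (mulf_neq0 two_neq0 i_neq0)); rewrite mulr0 -cross_sg sg0T sg1T.
by rewrite -!mulrA h subrr.
Qed.

Lemma crossTT a b c d : a * d = b * c -> cross (Tm a b) (Tm c d) = 0.
Proof. by move=> h; apply: crossT; rewrite sg0T sg1T mulrCA h mulrCA. Qed.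

Lemma cross_sym P Q : cross P Q = 0 -> cross Q P = 0.
Proof. by rewrite /cross => /eqP; rewrite subr_eq0 => /eqP h; rewrite mulrC -h mulrC subrr. Qed.

Lemma poly_vanish (r E : {poly C}) : E != 0 ->
  (forall t, E.[t] != 0 -> r.[t] = 0) -> r = 0.
Proof.
move=> E0 h; suff /eqP : r * E = 0 by rewrite mulf_eq0 (negbTE E0) orbF => /eqP.
apply/eqP; apply/negPn/negP => nz.
pose rs := [seq (n%:R : C) | n <- iota 0 (size (r * E))].
suff [ha hu] : all (root (r * E)) rs /\ uniq rs.
  by have := max_poly_roots nz ha hu; rewrite size_map size_iota ltnn.
split.
  apply/allP => t _; rewrite /root hornerM.
  by case: (eqVneq E.[t] 0) => [->|/h ->]; rewrite ?mulr0 ?mul0r.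
rewrite map_inj_uniq ?iota_uniq // => a b /eqP; rewrite eqr_nat => /eqP.
by [].
Qed.

Lemma polyfun_curve n m (w : C -> pt R n m) (g : pt R n m -> C) :
  (forall j, exists P : {poly C}, forall t, (w t).1 j = P.[t]) ->
  (forall j, exists P : {poly C}, forall t, ((w t).2 j).1 = P.[t]) ->
  (forall j, exists P : {poly C}, forall t, ((w t).2 j).2 = P.[t]) ->
  polyfun g -> exists r : {poly C}, forall t, g (w t) = r.[t].
Proof.
move=> h1 h2 h3; elim.
- by move=> c; exists c%:P => t; rewrite hornerC.
- by move=> j; have [P hP] := h1 j; exists P.
- by move=> j; have [P hP] := h2 j; exists P.
- by move=> j; have [P hP] := h3 j; exists P.
- move=> f g' _ [r1 e1] _ [r2 e2]; exists (r1 + r2) => t; by rewrite hornerD e1 e2.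
- move=> f g' _ [r1 e1] _ [r2 e2]; exists (r1 * r2) => t; by rewrite hornerM e1 e2.
Qed.

Lemma zcl_curve n m (A : pt R n m -> Prop) (w : C -> pt R n m) (E : {poly C})
    (q : pt R n m) :
  (forall j, exists P : {poly C}, forall t, (w t).1 j = P.[t]) ->
  (forall j, exists P : {poly C}, forall t, ((w t).2 j).1 = P.[t]) ->
  (forall j, exists P : {poly C}, forall t, ((w t).2 j).2 = P.[t]) ->
  E != 0 -> (forall t, E.[t] != 0 -> valid (w t) /\ A (w t)) ->
  valid q -> same (w 0) q -> zclosure A q.
Proof.
move=> h1 h2 h3 E0 hA vq hs; split; first exact: vq.
move=> d g [pg hg] gA; case: hs => lam [hl ->].
have [r er] := polyfun_curve _ _ _ _ h1 h2 h3 pg.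
have r0 : r = 0.
  apply: (poly_vanish _ _ E0) => t /hA [vw Aw]; rewrite -er; exact: gA.
by rewrite hg // er r0 horner0 mulr0.
Qed.


Variables (al be : C).
Hypotheses (al0 : al != 0) (al1 : al != 1) (be0 : be != 0) (be1 : be != 1).

Definition k0 : 'I_5 := @Ordinal 5 0 isT.
Definition k1 : 'I_5 := @Ordinal 5 1 isT.
Definition k2 : 'I_5 := @Ordinal 5 2 isT.
Definition k3 : 'I_5 := @Ordinal 5 3 isT.
Definition k4 : 'I_5 := @Ordinal 5 4 isT.

Lemma ord5 (k : 'I_5) : k = k0 \/ k = k1 \/ k = k2 \/ k = k3 \/ k = k4.
Proof.
case: k => [[|[|[|[|[|n]]]]] hk] //.
- by left; apply: val_inj.
- by right; left; apply: val_inj.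
- by right; right; left; apply: val_inj.
- by right; right; right; left; apply: val_inj.
- by right; right; right; right; apply: val_inj.
Qed.
Ltac c5 k := case: (ord5 k) => [->|[->|[->|[->|->]]]].

Definition cx (k : 'I_5) : C := match val k with 0 | 3 | 4 => 0 | 1 => 1 | _ => al end.
Definition cu (k : 'I_5) : C := match val k with 3 => 1 | 4 => be | _ => 0 end.

Lemma centreE k : centre al be k = (cx k + cu k, i * cx k - i * cu k).
Proof.
by c5 k; rewrite /centre /cx /cu /=; congr pair; ring.
Qed.

Definition xc (w : pt R 2 5) : C := (w.1 0 - i * w.1 1) / 2.
Definition uc (w : pt R 2 5) : C := (w.1 0 + i * w.1 1) / 2.
Definition mkpt (x u : C) (s : 'I_5 -> C * C) : pt R 2 5 :=
  (fun j => if val j == 0%N then x + u else i * x - i * u, s).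

Lemma xc_mk x u s : xc (mkpt x u s) = x.
Proof. have h := i2; rewrite /xc /mkpt /=; by field: h. Qed.
Lemma uc_mk x u s : uc (mkpt x u s) = u.
Proof. have h := i2; rewrite /uc /mkpt /=; by field: h. Qed.
Lemma w10 (w : pt R 2 5) : w.1 0 = xc w + uc w.
Proof. have h := i2; rewrite /xc /uc; by field: h. Qed.
Lemma w11 (w : pt R 2 5) : w.1 1 = i * xc w - i * uc w.
Proof. have h := i2; rewrite /xc /uc; by field: h. Qed.
Lemma line1E (w : pt R 2 5) : w.1 0 + i * w.1 1 = 2 * uc w.
Proof. have h := i2; rewrite /uc; by field: h. Qed.
Lemma line2E (w : pt R 2 5) : w.1 0 - i * w.1 1 = 2 * xc w.
Proof. have h := i2; rewrite /xc; by field: h. Qed.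

Lemma ord2 (f g : 'I_2 -> C) : f 0 = g 0 -> f 1 = g 1 -> f = g.
Proof.
move=> h0 h1; apply: functional_extensionality => -[[|[|n]] hj] //.
  by rewrite (_ : Ordinal hj = 0) //; apply: val_inj.
by rewrite (_ : Ordinal hj = 1) //; apply: val_inj.
Qed.

Lemma ord4 (f g : 'I_4 -> C) : f 0 = g 0 -> f 1 = g 1 -> f 2 = g 2 -> f 3 = g 3 -> f = g.
Proof.
move=> h0 h1 h2 h3; apply: functional_extensionality => -[[|[|[|[|n]]]] hj] //.
- by rewrite (_ : Ordinal hj = 0) //; apply: val_inj.
- by rewrite (_ : Ordinal hj = 1) //; apply: val_inj.
- by rewrite (_ : Ordinal hj = 2%R) //; apply: val_inj.
- by rewrite (_ : Ordinal hj = 3%R) //; apply: val_inj.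
Qed.

Lemma w1_mk (w : pt R 2 5) s : w.1 = (mkpt (xc w) (uc w) s).1.
Proof. by apply: ord2; rewrite /mkpt /= ?w10 ?w11. Qed.

Lemma bd_centre (w : pt R 2 5) k : blowdown w = centre al be k -> xc w = cx k /\ uc w = cu k.
Proof.
rewrite centreE /blowdown => -[e0 e1]; have h := i2; have h2 := half2.
by rewrite /xc /uc e0 e1; split; by field: h.
Qed.

Lemma bl_sig (w : pt R 2 5) k :
  (w.1 0 - (centre al be k).1) * (w.2 k).2 = (w.1 1 - (centre al be k).2) * (w.2 k).1
  <-> (xc w - cx k) * sg1 (w.2 k) = (uc w - cu k) * sg0 (w.2 k).
Proof.
have h := i2; have h2 := half2.
have key : (xc w - cx k) * sg1 (w.2 k) - (uc w - cu k) * sg0 (w.2 k) =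
   i * ((w.1 0 - (centre al be k).1) * (w.2 k).2 - (w.1 1 - (centre al be k).2) * (w.2 k).1).
  by rewrite centreE /xc /uc /sg0 /sg1 /=; field: h.
split => e; apply/eqP; rewrite -subr_eq0; apply/eqP.
  by rewrite key e subrr mulr0.
by apply: (mulfI i_neq0); rewrite -key e subrr mulr0.
Qed.

Lemma Bl_sig (w : pt R 2 5) : Bl_ab al be w <->
  valid w /\ forall k, (xc w - cx k) * sg1 (w.2 k) = (uc w - cu k) * sg0 (w.2 k).
Proof.
split=> -[v h]; split => // k; by apply/bl_sig; apply: h.
Qed.

Lemma centres_dist j k : j != k -> cx j != cx k \/ cu j != cu k.
Proof.
have o0 : (1 : C) != 0 by rewrite oner_eq0.
have o0' : (0 : C) != 1 by rewrite eq_sym oner_eq0.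
c5 j; c5 k => //= _; rewrite /cx /cu /=;
  by [left|right|left; rewrite eq_sym|right; rewrite eq_sym].
Qed.

Definition P (k : 'I_5) (x : C) : C :=
  match val k with 0 => (x - 1) * (x - al) | 1 => x * (x - al) | _ => x * (x - 1) end.
Definition Q (k : 'I_5) (u : C) : C :=
  match val k with 0 => (u - 1) * (u - be) | 3 => u * (u - be) | _ => u * (u - 1) end.
Definition kx (x : C) : 'I_5 := if x == 0 then k0 else if x == 1 then k1 else k2.
Definition ku (u : C) : 'I_5 := if u == 0 then k0 else if u == 1 then k3 else k4.
Definition fx (x : C) := x * (x - 1) * (x - al).
Definition fu (u : C) := u * (u - 1) * (u - be).

Lemma kx_cases x : (x = 0 /\ kx x = k0) \/ (x = 1 /\ kx x = k1) \/ (x != 0 /\ x != 1 /\ kx x = k2).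
Proof.
rewrite /kx; case: (eqVneq x 0) => [->|x0]; first by left.
case: (eqVneq x 1) => [->|x1]; first by right; left.
by right; right.
Qed.

Lemma ku_cases u : (u = 0 /\ ku u = k0) \/ (u = 1 /\ ku u = k3) \/ (u != 0 /\ u != 1 /\ ku u = k4).
Proof.
rewrite /ku; case: (eqVneq u 0) => [->|u0]; first by left.
case: (eqVneq u 1) => [->|u1]; first by right; left.
by right; right.
Qed.

Lemma kx_cu x : cu (kx x) = 0.
Proof. by case: (kx_cases x) => [[_ ->]|[[_ ->]|[_ [_ ->]]]]. Qed.
Lemma ku_cx u : cx (ku u) = 0.
Proof. by case: (ku_cases u) => [[_ ->]|[[_ ->]|[_ [_ ->]]]]. Qed.

Lemma kx_fac x y : (y - cx (kx x)) * P (kx x) y = fx y.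
Proof. by rewrite /fx; case: (kx_cases x) => [[_ ->]|[[_ ->]|[_ [_ ->]]]]; rewrite /P /cx /=; ring. Qed.
Lemma ku_fac u y : (y - cu (ku u)) * Q (ku u) y = fu y.
Proof. by rewrite /fu; case: (ku_cases u) => [[_ ->]|[[_ ->]|[_ [_ ->]]]]; rewrite /Q /cu /=; ring. Qed.

Lemma kx_root' x : cx (kx x) = x -> fx x = 0.
Proof. by move=> h; rewrite -(kx_fac x x) {1}h subrr mul0r. Qed.
Lemma ku_root' u : cu (ku u) = u -> fu u = 0.
Proof. by move=> h; rewrite -(ku_fac u u) {1}h subrr mul0r. Qed.

Lemma kx_root x : fx x = 0 -> cx (kx x) = x.
Proof.
rewrite /fx => /eqP; rewrite !mulf_eq0 !subr_eq0 => /orP[/orP[]|] /eqP ->.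
- by rewrite /kx eqxx.
- by rewrite /kx oner_eq0 eqxx.
- by rewrite /kx (negbTE al0) (negbTE al1).
Qed.
Lemma ku_root u : fu u = 0 -> cu (ku u) = u.
Proof.
rewrite /fu => /eqP; rewrite !mulf_eq0 !subr_eq0 => /orP[/orP[]|] /eqP ->.
- by rewrite /ku eqxx.
- by rewrite /ku oner_eq0 eqxx.
- by rewrite /ku (negbTE be0) (negbTE be1).
Qed.

Lemma kx_nz x : cx (kx x) = x -> P (kx x) x != 0.
Proof.
have o : (1 : C) != 0 by rewrite oner_eq0.
case: (kx_cases x) => [[-> ->]|[[-> ->]|[_ [_ ->]]]]; rewrite /P /cx /= => h.
- by rewrite !sub0r mulf_neq0 // oppr_eq0.
- by rewrite mul1r subr_eq0 eq_sym.
- by rewrite -h mulf_neq0 // subr_eq0.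
Qed.
Lemma ku_nz u : cu (ku u) = u -> Q (ku u) u != 0.
Proof.
have o : (1 : C) != 0 by rewrite oner_eq0.
case: (ku_cases u) => [[-> ->]|[[-> ->]|[_ [_ ->]]]]; rewrite /Q /cu /= => h.
- by rewrite !sub0r mulf_neq0 // oppr_eq0.
- by rewrite mul1r subr_eq0 eq_sym.
- by rewrite -h mulf_neq0 // subr_eq0.
Qed.

Lemma kx_not x : cx (kx x) != x -> forall j, cu j = 0 -> x != cx j.
Proof.
move=> h j; have o : (1 : C) != 0 by rewrite oner_eq0.
case: (kx_cases x) h => [[-> ->]|[[-> ->]|[x0 [x1 ->]]]]; rewrite /cx /= ?eqxx //.
move=> xa; c5 j; rewrite /cu /cx //= => _.
- by rewrite eq_sym.
Qed.
Lemma ku_not u : cu (ku u) != u -> forall j, cx j = 0 -> u != cu j.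
Proof.
move=> h j; have o : (1 : C) != 0 by rewrite oner_eq0.
case: (ku_cases u) h => [[-> ->]|[[-> ->]|[u0 [u1 ->]]]]; rewrite /cu /= ?eqxx //.
move=> ub; c5 j; rewrite /cu /cx //= => _.
- by rewrite eq_sym.
Qed.

Lemma kx_cx k : cu k = 0 -> kx (cx k) = k.
Proof.
c5 k; rewrite /cu /cx /kx /= ?eqxx ?oner_eq0 ?(negbTE al0) ?(negbTE al1) //.
- by move=> /eqP; rewrite oner_eq0.
- by move=> /eqP; rewrite (negbTE be0).
Qed.
Lemma ku_cu k : cx k = 0 -> ku (cu k) = k.
Proof.
c5 k; rewrite /cu /cx /ku /= ?eqxx ?oner_eq0 ?(negbTE be0) ?(negbTE be1) //.
- by move=> /eqP; rewrite oner_eq0.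
- by move=> /eqP; rewrite (negbTE al0).
Qed.

Definition alt (k : 'I_5) (p : pt R 4 0) : C * C :=
  match val k with 0 | 1 | 2 => (p.1 1, P k (p.1 0)) | _ => (Q k (p.1 2), p.1 3) end.
Definition Fpair (k : 'I_5) (p : pt R 4 0) : C * C :=
  if (p.1 0 - cx k != 0) || (p.1 2 - cu k != 0) then Tm (p.1 0 - cx k) (p.1 2 - cu k)
  else Tm (alt k p).1 (alt k p).2.
Definition F (p : pt R 4 0) : pt R 2 5 := mkpt (p.1 0) (p.1 2) (fun k => Fpair k p).

Lemma Sx (p : pt R 4 0) : S_ab al be p ->
  [/\ p.1 1 * p.1 2 = fx (p.1 0), p.1 0 * p.1 3 = fu (p.1 2) &
      p.1 1 * p.1 3 = (p.1 0 - 1) * (p.1 0 - al) * (p.1 2 - 1) * (p.1 2 - be)].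
Proof. by []. Qed.

Lemma alt_nz k (p : pt R 4 0) : p.1 0 = cx k -> p.1 2 = cu k -> nzp (alt k p).
Proof.
have o : (1 : C) != 0 by rewrite oner_eq0.
c5 k; rewrite /alt /P /Q /cx /cu /= => e1 e2; rewrite ?e1 ?e2.
- by right; apply/eqP; rewrite !sub0r mulf_neq0 // oppr_eq0.
- by right; apply/eqP; rewrite mul1r subr_eq0 eq_sym.
- by right; apply/eqP; rewrite mulf_neq0 // subr_eq0.
- by left; apply/eqP; rewrite /= mul1r subr_eq0 eq_sym.
- by left; apply/eqP; rewrite /= mulf_neq0 // subr_eq0.
Qed.

Lemma alt_cross k (p : pt R 4 0) : S_ab al be p ->
  (p.1 0 - cx k) * (alt k p).2 = (p.1 2 - cu k) * (alt k p).1.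
Proof.
move=> /Sx [e1 e2 _]; move: e1 e2; rewrite /fx /fu.
c5 k; rewrite /alt /P /Q /cx /cu /= => e1 e2.
- by rewrite subr0 subr0 mulrA [_ * p.1 1]mulrC e1.
- by rewrite subr0 [_ * p.1 1]mulrC e1; ring.
- by rewrite subr0 [_ * p.1 1]mulrC e1; ring.
- by rewrite subr0 e2; ring.
- by rewrite subr0 e2; ring.
Qed.

Lemma alt_kx (p : pt R 4 0) : alt (kx (p.1 0)) p = (p.1 1, P (kx (p.1 0)) (p.1 0)).
Proof. by rewrite /alt; case: (kx_cases (p.1 0)) => [[_ ->]|[[_ ->]|[_ [_ ->]]]]. Qed.
Lemma alt_ku_nz (p : pt R 4 0) : S_ab al be p -> p.1 0 = 0 ->
  cu (ku (p.1 2)) = p.1 2 -> (alt (ku (p.1 2)) p).1 != 0.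
Proof.
move=> /Sx [_ _ e3] x0 hr; have := ku_nz _ hr.
rewrite /alt; case: (ku_cases (p.1 2)) => [[u0 ->]|[[_ ->]|[_ [_ ->]]]] //= _.
apply/eqP => y0; move: e3; rewrite y0 mul0r x0 u0 !sub0r => /eqP.
by apply/negP; rewrite eq_sym !mulf_neq0 // oppr_eq0 ?oner_eq0.
Qed.

Lemma Fpair_nz k p : nzp (Fpair k p).
Proof.
rewrite /Fpair; case: ifP => [/orP h|/negbT hn]; apply: nzp_Tm.
  by case: h => /eqP h; [left|right].
move: hn; rewrite negb_or !negbK !subr_eq0 => /andP[/eqP e1 /eqP e2].
by case: (alt_nz k p e1 e2) => h; [left|right].
Qed.

Lemma Fpair_bl k p : (p.1 0 - cx k) * sg1 (Fpair k p) = (p.1 2 - cu k) * sg0 (Fpair k p).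
Proof.
rewrite /Fpair; case: ifP => [_|/negbT].
  by rewrite sg0T sg1T; ring.
by rewrite negb_or !negbK => /andP[/eqP -> /eqP ->]; rewrite !mul0r.
Qed.

Lemma Fpair_alt k (p : pt R 4 0) : p.1 0 = cx k -> p.1 2 = cu k ->
  Fpair k p = Tm (alt k p).1 (alt k p).2.
Proof. by move=> e1 e2; rewrite /Fpair e1 e2 !subrr eqxx. Qed.

Lemma Fpair_base k (p : pt R 4 0) : (p.1 0 - cx k != 0) || (p.1 2 - cu k != 0) ->
  Fpair k p = Tm (p.1 0 - cx k) (p.1 2 - cu k).
Proof. by move=> h; rewrite /Fpair h. Qed.

Lemma F_valid p : valid (F p).
Proof. by move=> k; apply: Fpair_nz. Qed.

Lemma F_Bl p : Bl_ab al be (F p).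
Proof.
apply/Bl_sig; split; first exact: F_valid.
by move=> k; rewrite xc_mk uc_mk; apply: Fpair_bl.
Qed.

Lemma F_bd p : blowdown (F p) = nu_ab p.
Proof. by []. Qed.

Lemma prod_dz0 n (f : pt R n 5 -> C) :
  (forall lam w, f (scale lam w) = f w) -> homog dz f.
Proof. by move=> h lam _ w; rewrite prod_dz mul1r h. Qed.

Lemma F_ST1 p : S_ab al be p -> ~ strict_transform al be (fun z => z.1 + i * z.2) (F p).
Proof.
move=> hS [_ H]; have [e1 e2 e3] := Sx p hS.
case: (eqVneq (p.1 2) 0) => [u0|u0].
- have hr : cx (kx (p.1 0)) = p.1 0 by apply: kx_root; rewrite -e1 u0 mulr0.
  suff : sg1 ((F p).2 (kx (p.1 0))) = 0.
    rewrite /F /mkpt /= Fpair_alt ?u0 ?kx_cu //.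
    rewrite sg1T alt_kx /= => /eqP; rewrite mulf_eq0 (negbTE two_neq0) /=.
    by apply/negP; apply: kx_nz.
  apply: (H (dl (kx (p.1 0))) (fun w => sg1 (w.2 (kx (p.1 0))))).
  + split; first by rewrite /sg1; pf.
    move=> lam _ w; rewrite prod_dl /sg1 /scale /=; ring.
  + move=> w vw [bw [lw nc]]; move/Bl_sig: bw => [_ /(_ (kx (p.1 0)))].
    move: lw; rewrite /blowdown /= line1E => /eqP; rewrite mulf_eq0 (negbTE two_neq0) /= => /eqP uw.
    rewrite uw kx_cu subrr mul0r => /eqP; rewrite mulf_eq0 => /orP[|/eqP //].
    rewrite subr_eq0 => /eqP xw; case: (nc (kx (p.1 0))); rewrite centreE /blowdown w10 w11 xw uw kx_cu.
    by [].
- suff : (fun w : pt R 2 5 => w.1 0 + i * w.1 1) (F p) = 0.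
    change ((F p).1 0 + i * (F p).1 1 = 0 -> False).
    by rewrite line1E uc_mk => /eqP; rewrite mulf_eq0 (negbTE two_neq0) (negbTE u0).
  apply: (H dz (fun w : pt R 2 5 => w.1 0 + i * w.1 1)).
  + by split; [pf | apply: prod_dz0].
  + by move=> w _ [_ []].
Qed.

Lemma F_ST2 p : S_ab al be p -> ~ strict_transform al be (fun z => z.1 - i * z.2) (F p).
Proof.
move=> hS [_ H]; have [e1 e2 e3] := Sx p hS.
case: (eqVneq (p.1 0) 0) => [x0|x0].
- have hr : cu (ku (p.1 2)) = p.1 2 by apply: ku_root; rewrite -e2 x0 mul0r.
  suff : sg0 ((F p).2 (ku (p.1 2))) = 0.
    rewrite /F /mkpt /= Fpair_alt ?x0 ?ku_cx //.
    rewrite sg0T => /eqP; rewrite mulf_eq0 (negbTE two_neq0) /=.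
    by apply/negP; apply: alt_ku_nz.
  apply: (H (dl (ku (p.1 2))) (fun w => sg0 (w.2 (ku (p.1 2))))).
  + split; first by rewrite /sg0; pf.
    move=> lam _ w; rewrite prod_dl /sg0 /scale /=; ring.
  + move=> w vw [bw [lw nc]]; move/Bl_sig: bw => [_ /(_ (ku (p.1 2)))].
    move: lw; rewrite /blowdown /= line2E => /eqP; rewrite mulf_eq0 (negbTE two_neq0) /= => /eqP xw.
    rewrite xw ku_cx subrr mul0r => /esym /eqP; rewrite mulf_eq0 => /orP[|/eqP //].
    rewrite subr_eq0 => /eqP uw; case: (nc (ku (p.1 2))); rewrite centreE /blowdown w10 w11 xw uw ku_cx.
    by [].
- suff : (fun w : pt R 2 5 => w.1 0 - i * w.1 1) (F p) = 0.
    change ((F p).1 0 - i * (F p).1 1 = 0 -> False).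
    by rewrite line2E xc_mk => /eqP; rewrite mulf_eq0 (negbTE two_neq0) (negbTE x0).
  apply: (H dz (fun w : pt R 2 5 => w.1 0 - i * w.1 1)).
  + by split; [pf | apply: prod_dz0].
  + by move=> w _ [_ []].
Qed.

Lemma F_W p : S_ab al be p -> W_ab al be (F p).
Proof. by move=> hS; split; [apply: F_Bl | split; [apply: F_ST1 | apply: F_ST2]]. Qed.

Lemma lin_ex (f : C -> C) a b : (forall t, f t = a + b * t) ->
  exists Pl : {poly C}, forall t, f t = Pl.[t].
Proof.
move=> h; exists (a%:P + b *: 'X) => t.
by rewrite h hornerD hornerC hornerZ hornerX.
Qed.

Definition wc (k : 'I_5) (ex eu t : C) : pt R 2 5 :=
  mkpt (cx k + ex * t) (cu k + eu * t)
    (fun j => if j == k then Tm ex eu else Tm (cx k + ex * t - cx j) (cu k + eu * t - cu j)).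

Lemma DL k ex eu (l : C * C -> C) (E : {poly C}) (q : pt R 2 5) :
  E != 0 -> nzp (ex, eu) ->
  (forall t, E.[t] != 0 ->
     (forall j, cx k + ex * t != cx j \/ cu k + eu * t != cu j) /\
     l (blowdown (wc k ex eu t)) = 0) ->
  Bl_ab al be q -> xc q = cx k -> uc q = cu k ->
  ex * sg1 (q.2 k) = eu * sg0 (q.2 k) ->
  strict_transform al be l q.
Proof.
move=> E0 nze hE bq hx hu hk.
have [vq bq'] := (iffLR (Bl_sig q)) bq.
rewrite /strict_transform; apply: (zcl_curve _ _ _ (wc k ex eu) E q) => //.
- move=> j; rewrite /wc /mkpt /=; case: (val j == 0%N).
    by apply: (lin_ex _ (cx k + cu k) (ex + eu)) => t; ring.
  by apply: (lin_ex _ (i * cx k - i * cu k) (i * ex - i * eu)) => t; ring.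
- move=> j; rewrite /wc /mkpt /=; case: (j == k).
    by apply: (lin_ex _ (ex + eu) (0)) => t; rewrite /Tm /=; ring.
  by apply: (lin_ex _ (cx k - cx j + (cu k - cu j)) (ex + eu)) => t; rewrite /Tm /=; ring.
- move=> j; rewrite /wc /mkpt /=; case: (j == k).
    by apply: (lin_ex _ (i * (ex - eu)) (0)) => t; rewrite /Tm /=; ring.
  by apply: (lin_ex _ (i * (cx k - cx j - (cu k - cu j))) (i * (ex - eu))) => t;
    rewrite /Tm /=; ring.
- move=> t /hE [nc hl].
  have vw : valid (wc k ex eu t).
    move=> j; rewrite /wc /mkpt /=; case: ifP => _; apply: nzp_Tm => //.
    by case: (nc j) => /eqP h; [left|right] => /= /eqP; rewrite subr_eq0 => /eqP.
  split => //; split; last split => //.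
    apply/Bl_sig; split => // j; rewrite /wc xc_mk uc_mk /mkpt /=.
    case: (eqVneq j k) => [->|_]; rewrite sg0T sg1T; ring.
  move=> j /bd_centre; rewrite /wc xc_mk uc_mk => -[e1 e2].
  by case: (nc j); rewrite ?e1 ?e2 eqxx.
- apply: same_intro.
  + apply: ord2; rewrite /wc /mkpt /= ?w10 ?w11 hx hu; ring.
  + move=> j; rewrite /wc /mkpt /=; case: ifP => [_|/negbT njk]; apply: nzp_Tm => //.
    rewrite !mulr0 !addr0; case: (centres_dist _ _ njk) => hh; [left|right] => /= /eqP;
      by rewrite subr_eq0 eq_sym (negbTE hh).
  + exact: vq.
  + move=> j; rewrite /wc /mkpt /=; case: ifP => [/eqP ->|_]; apply: crossT => //.
    by rewrite !mulr0 !addr0 -hx -hu bq'.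
Qed.

Definition ST1 := strict_transform al be (fun z => z.1 + i * z.2).
Definition ST2 := strict_transform al be (fun z => z.1 - i * z.2).

Lemma cu0_cases j : cu j = 0 -> cx j = 0 \/ cx j = 1 \/ cx j = al.
Proof.
c5 j; rewrite /cu /cx /= => h; auto; move: h => /eqP; rewrite ?oner_eq0 ?(negbTE be0) //.
Qed.
Lemma cx0_cases j : cx j = 0 -> cu j = 0 \/ cu j = 1 \/ cu j = be.
Proof.
c5 j; rewrite /cu /cx /= => h; auto; move: h => /eqP; rewrite ?oner_eq0 ?(negbTE al0) //.
Qed.

Lemma W1 q : Bl_ab al be q -> ~ ST1 q -> uc q = 0 ->
  cx (kx (xc q)) = xc q /\ sg1 (q.2 (kx (xc q))) != 0.
Proof.
move=> bq nst u0; have [vq bq'] := (iffLR (Bl_sig q)) bq.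
have hx : cx (kx (xc q)) = xc q.
  apply/eqP; apply/negPn/negP => hn; apply: nst; split => // d g _ gA.
  apply: gA => //; split => //; split.
    by rewrite /blowdown /= line1E u0 mulr0.
  move=> j /bd_centre [e1 e2]; case: (eqVneq (cu j) 0) => [c0|c0].
    by have := kx_not _ hn j c0; rewrite e1 eqxx.
  by move: c0; rewrite -e2 u0 eqxx.
split => //; apply/negP => /eqP s0; apply: nst.
pose c := cx (kx (xc q)).
pose E := ('X + c%:P) * ('X + (c - 1)%:P) * ('X + (c - al)%:P).
apply: (DL (kx (xc q)) 1 0 _ E q) => //.
- by apply: monic_neq0; rewrite !monicMl ?monicXaddC.
- by left; apply/eqP; rewrite oner_eq0.
- move=> t; rewrite !(hornerM, hornerD, hornerX, hornerC) !mulf_eq0 !negb_or => /andP[/andP[h1 h2] h3].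
  split.
    move=> j; case: (eqVneq (cu j) 0) => cj; [left|right].
      rewrite mul1r addrC; case: (cu0_cases _ cj) => [->|[->|->]] //.
      + by move: h2; rewrite addrA subr_eq0.
      + by move: h3; rewrite addrA subr_eq0.
    by rewrite kx_cu mul0r addr0 eq_sym.
  change ((wc (kx (xc q)) 1 0 t).1 0 + i * (wc (kx (xc q)) 1 0 t).1 1 = 0).
  by rewrite line1E /wc uc_mk kx_cu mul0r addr0 mulr0.
- by rewrite u0 kx_cu.
- by rewrite s0 mulr0 mul0r.
Qed.

Lemma W2 q : Bl_ab al be q -> ~ ST2 q -> xc q = 0 ->
  cu (ku (uc q)) = uc q /\ sg0 (q.2 (ku (uc q))) != 0.
Proof.
move=> bq nst x0; have [vq bq'] := (iffLR (Bl_sig q)) bq.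
have hu : cu (ku (uc q)) = uc q.
  apply/eqP; apply/negPn/negP => hn; apply: nst; split => // d g _ gA.
  apply: gA => //; split => //; split.
    by rewrite /blowdown /= line2E x0 mulr0.
  move=> j /bd_centre [e1 e2]; case: (eqVneq (cx j) 0) => [c0|c0].
    by have := ku_not _ hn j c0; rewrite e2 eqxx.
  by move: c0; rewrite -e1 x0 eqxx.
split => //; apply/negP => /eqP s0; apply: nst.
pose c := cu (ku (uc q)).
pose E := ('X + c%:P) * ('X + (c - 1)%:P) * ('X + (c - be)%:P).
apply: (DL (ku (uc q)) 0 1 _ E q) => //.
- by apply: monic_neq0; rewrite !monicMl ?monicXaddC.
- by right; apply/eqP; rewrite oner_eq0.
- move=> t; rewrite !(hornerM, hornerD, hornerX, hornerC) !mulf_eq0 !negb_or => /andP[/andP[h1 h2] h3].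
  split.
    move=> j; case: (eqVneq (cx j) 0) => cj; [right|left].
      rewrite mul1r addrC; case: (cx0_cases _ cj) => [->|[->|->]] //.
      + by move: h2; rewrite addrA subr_eq0.
      + by move: h3; rewrite addrA subr_eq0.
    by rewrite ku_cx mul0r addr0 eq_sym.
  change ((wc (ku (uc q)) 0 1 t).1 0 - i * (wc (ku (uc q)) 0 1 t).1 1 = 0).
  by rewrite line2E /wc xc_mk ku_cx mul0r addr0 mulr0.
- by rewrite x0 ku_cx.
- by rewrite s0 mulr0 mul0r.
Qed.

Definition yG (w : pt R 2 5) : C :=
  if uc w != 0 then fx (xc w) / uc w
  else P (kx (xc w)) (xc w) * sg0 (w.2 (kx (xc w))) / sg1 (w.2 (kx (xc w))).
Definition vG (w : pt R 2 5) : C :=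
  if xc w != 0 then fu (uc w) / xc w
  else Q (ku (uc w)) (uc w) * sg1 (w.2 (ku (uc w))) / sg0 (w.2 (ku (uc w))).
Definition G (w : pt R 2 5) : pt R 4 0 :=
  (fun j : 'I_4 => match val j with 0 => xc w | 1 => yG w | 2 => uc w | _ => vG w end,
   fun _ => (0, 0)).

Lemma S_intro (p : pt R 4 0) : p.1 1 * p.1 2 = fx (p.1 0) -> p.1 0 * p.1 3 = fu (p.1 2) ->
  p.1 1 * p.1 3 = (p.1 0 - 1) * (p.1 0 - al) * (p.1 2 - 1) * (p.1 2 - be) -> S_ab al be p.
Proof. by move=> *; split. Qed.

Definition Wp q := [/\ Bl_ab al be q, ~ ST1 q & ~ ST2 q].
Lemma Wp_W q : W_ab al be q <-> Wp q.
Proof. by split=> [[a [b c]]|[a b c]]. Qed.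

Lemma G_S q : Wp q -> S_ab al be (G q).
Proof.
case=> bq n1 n2; apply: S_intro; rewrite /G /=.
- case: (eqVneq (uc q) 0) => [u0|u0].
    by rewrite u0 mulr0 (kx_root' _ (W1 q bq n1 u0).1).
  by rewrite /yG u0 divfK.
- case: (eqVneq (xc q) 0) => [x0|x0].
    by rewrite x0 mul0r (ku_root' _ (W2 q bq n2 x0).1).
  by rewrite /vG x0 mulrC divfK.
- rewrite /yG /vG.
  case: (eqVneq (uc q) 0) => [u0|u0]; case: (eqVneq (xc q) 0) => [x0|x0] /=.
  + have [h1 s1] := W1 q bq n1 u0; have [h2 s2] := W2 q bq n2 x0.
    move: h1 h2 s1 s2; rewrite u0 x0 /kx /ku eqxx /P /Q /= => _ _ s1 s2.
    by field; rewrite s1 s2.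
  + rewrite u0 /fu !mul0r mulr0.
    have := kx_root' _ (W1 q bq n1 u0).1; rewrite /fx => /eqP.
    rewrite mulf_eq0 mulf_eq0 (negbTE x0) /= => /orP[] /eqP ->; ring.
  + rewrite x0 /fx !mul0r.
    have := ku_root' _ (W2 q bq n2 x0).1; rewrite /fu => /eqP.
    rewrite mulf_eq0 mulf_eq0 (negbTE u0) /= => /orP[] /eqP ->; ring.
  + rewrite /fx /fu; field; by rewrite u0 x0.
Qed.

Lemma mh_sg0 k : mhpoly (dl k) (fun w : pt R 2 5 => sg0 (w.2 k)).
Proof.
split; first by rewrite /sg0; pf.
by move=> lam _ w; rewrite prod_dl /sg0 /scale /=; ring.
Qed.
Lemma mh_sg1 k : mhpoly (dl k) (fun w : pt R 2 5 => sg1 (w.2 k)).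
Proof.
split; first by rewrite /sg1; pf.
by move=> lam _ w; rewrite prod_dl /sg1 /scale /=; ring.
Qed.
Lemma mh_xdep (f : C -> C -> C) : polyfun (fun w : pt R 2 5 => f (xc w) (uc w)) ->
  mhpoly dz (fun w : pt R 2 5 => f (xc w) (uc w)).
Proof. by move=> h; split => //; apply: prod_dz0. Qed.

Lemma pf_P k : polyfun (fun w : pt R 2 5 => P k (xc w)).
Proof. by rewrite /P; case: (val k) => [|[|n]]; rewrite /xc; pf. Qed.
Lemma pf_Q k : polyfun (fun w : pt R 2 5 => Q k (uc w)).
Proof. by rewrite /Q; case: (val k) => [|[|[|[|n]]]]; rewrite /uc; pf. Qed.

Lemma rep_y q : Bl_ab al be q -> ~ ST1 q ->
  exists dy hy ny, [/\ mhpoly dy hy, mhpoly dy ny, hy q != 0 &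
    forall q', Bl_ab al be q' -> hy q' != 0 -> yG q' = ny q' / hy q'].
Proof.
move=> bq n1; case: (eqVneq (uc q) 0) => [u0|u0].
- have [hx s1] := W1 q bq n1 u0.
  set k := kx (xc q) in hx s1 *.
  exists (dl k), (fun w => sg1 (w.2 k)), (fun w => P k (xc w) * sg0 (w.2 k)); split => //.
  + exact: mh_sg1.
  + apply: mh_mul0l; last exact: mh_sg0.
    by apply: (mh_xdep (fun x _ => P k x)); apply: pf_P.
  + move=> q' bq' s1'; have [_ /(_ k)] := (iffLR (Bl_sig q')) bq'.
    have ck : cu k = 0 by rewrite /k kx_cu.
    rewrite ck subr0 => e.
    rewrite /yG; case: (eqVneq (uc q') 0) => [u0'|u0'] /=.
      move: e; rewrite u0' mul0r => /eqP; rewrite mulf_eq0 (negbTE s1') orbF subr_eq0 => /eqP e.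
      by rewrite e /k kx_cx // -/k.
    rewrite -(kx_fac (xc q) (xc q')) -/k.
    apply/eqP; rewrite eq_sym -subr_eq0; apply/eqP.
    have -> : P k (xc q') * sg0 (q'.2 k) / sg1 (q'.2 k) = P k (xc q') * (uc q' * sg0 (q'.2 k)) / (uc q' * sg1 (q'.2 k)).
      by field; rewrite u0' s1'.
    by rewrite -e; field; rewrite u0' s1'.
- exists dz, uc, (fun w => fx (xc w)); split => //.
  + by apply: (mh_xdep (fun _ u => u)); rewrite /uc; pf.
  + by apply: (mh_xdep (fun x _ => fx x)); rewrite /fx /xc; pf.
  + by move=> q' _ h; rewrite /yG h.
Qed.

Lemma rep_v q : Bl_ab al be q -> ~ ST2 q ->
  exists dv hv nv, [/\ mhpoly dv hv, mhpoly dv nv, hv q != 0 &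
    forall q', Bl_ab al be q' -> hv q' != 0 -> vG q' = nv q' / hv q'].
Proof.
move=> bq n2; case: (eqVneq (xc q) 0) => [x0|x0].
- have [hu s0] := W2 q bq n2 x0.
  set k := ku (uc q) in hu s0 *.
  exists (dl k), (fun w => sg0 (w.2 k)), (fun w => Q k (uc w) * sg1 (w.2 k)); split => //.
  + exact: mh_sg0.
  + apply: mh_mul0l; last exact: mh_sg1.
    by apply: (mh_xdep (fun _ u => Q k u)); apply: pf_Q.
  + move=> q' bq' s0'; have [_ /(_ k)] := (iffLR (Bl_sig q')) bq'.
    have ck : cx k = 0 by rewrite /k ku_cx.
    rewrite ck subr0 => e.
    rewrite /vG; case: (eqVneq (xc q') 0) => [x0'|x0'] /=.
      move: e; rewrite x0' mul0r => /esym /eqP; rewrite mulf_eq0 (negbTE s0') orbF subr_eq0 => /eqP e.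
      by rewrite e /k ku_cu // -/k.
    rewrite -(ku_fac (uc q) (uc q')) -/k.
    apply/eqP; rewrite eq_sym -subr_eq0; apply/eqP.
    have -> : Q k (uc q') * sg1 (q'.2 k) / sg0 (q'.2 k) = Q k (uc q') * (xc q' * sg1 (q'.2 k)) / (xc q' * sg0 (q'.2 k)).
      by field; rewrite x0' s0'.
    by rewrite e; field; rewrite x0' s0'.
- exists dz, xc, (fun w => fu (uc w)); split => //.
  + by apply: (mh_xdep (fun x _ => x)); rewrite /xc; pf.
  + by apply: (mh_xdep (fun _ u => fu u)); rewrite /fu /uc; pf.
  + by move=> q' _ h; rewrite /vG h.
Qed.

Lemma ratio (c l a b : C) : l != 0 -> c * (l * a) / (l * b) = c * a / b.
Proof.
move=> l0; case: (eqVneq b 0) => [->|b0]; first by rewrite !mulr0 !invr0 !mulr0.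
by field; rewrite l0 b0.
Qed.

Lemma yG_scale lam w : (forall j, lam j <> 0) -> yG (scale lam w) = yG w.
Proof.
move=> hl; rewrite /yG (_ : xc (scale lam w) = xc w) // (_ : uc (scale lam w) = uc w) //.
case: ifP => // _; set k := kx (xc w).
have e0 : sg0 ((scale lam w).2 k) = lam k * sg0 (w.2 k) by rewrite /sg0 /=; ring.
have e1 : sg1 ((scale lam w).2 k) = lam k * sg1 (w.2 k) by rewrite /sg1 /=; ring.
by rewrite e0 e1 ratio //; apply/eqP.
Qed.
Lemma vG_scale lam w : (forall j, lam j <> 0) -> vG (scale lam w) = vG w.
Proof.
move=> hl; rewrite /vG (_ : xc (scale lam w) = xc w) // (_ : uc (scale lam w) = uc w) //.
case: ifP => // _; set k := ku (uc w).
have e0 : sg0 ((scale lam w).2 k) = lam k * sg0 (w.2 k) by rewrite /sg0 /=; ring.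
have e1 : sg1 ((scale lam w).2 k) = lam k * sg1 (w.2 k) by rewrite /sg1 /=; ring.
by rewrite e0 e1 ratio //; apply/eqP.
Qed.

Lemma G_morph : morphism (W_ab al be) (S_ab al be) G.
Proof.
split; [|split].
- move=> p _ /Wp_W hW; split; first by case.
  exact: G_S.
- move=> p q _ _ [lam [hl ->]].
  have -> : G (scale lam p) = G p.
    rewrite /G /= yG_scale // vG_scale //.
  exact: same_refl.
- move=> p _ /Wp_W [bp n1 n2].
  have [dy [hy [ny [mhy mny hyp ry]]]] := rep_y p bp n1.
  have [dv [hv [nv [mhv mnv hvp rv]]]] := rep_v p bp n2.
  exists (dadd dy dv), (fun w => hy w * hv w),
    (fun j w => match val j with 0 => xc w * (hy w * hv w) | 1 => ny w * hv w
                 | 2 => uc w * (hy w * hv w) | _ => hy w * nv w end),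
    (fun _ _ => 0%N), (fun _ _ => 0), (fun _ _ => 0).
  split; first exact: mh_mul.
  split; first by apply/eqP; rewrite mulf_neq0.
  split.
    have mx : mhpoly dz xc by apply: (mh_xdep (fun x _ => x)); rewrite /xc; pf.
    have mu : mhpoly dz uc by apply: (mh_xdep (fun _ u => u)); rewrite /uc; pf.
    case=> [[|[|[|[|n]]]] hj] /=.
    + by apply: mh_mul0l => //; apply: mh_mul.
    + exact: mh_mul.
    + by apply: mh_mul0l => //; apply: mh_mul.
    + exact: mh_mul.
    + exact: mh_mul.
  split; first by case.
  split; first by case.
  move=> q _ /Wp_W [bq _ _] /eqP; rewrite mulf_eq0 negb_or => /andP[hyq hvq] _.
  apply: same_intro; [|by case|by case|by case].
  apply: ord4 => /=.
  + by rewrite mulfK // mulf_neq0.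
  + by rewrite (ry q bq hyq); field; rewrite hyq hvq.
  + by rewrite mulfK // mulf_neq0.
  + by rewrite (rv q bq hvq); field; rewrite hyq hvq.
Qed.

Definition sel (k : 'I_5) (b : bool) (q : pt R 4 0) : C * C :=
  if b then (q.1 0 - cx k, q.1 2 - cu k) else alt k q.

Lemma pf_sel k b : polyfun (fun q : pt R 4 0 => (Tm (sel k b q).1 (sel k b q).2).1) /\
                   polyfun (fun q : pt R 4 0 => (Tm (sel k b q).1 (sel k b q).2).2).
Proof.
rewrite /sel /Tm; case: b => /=; first by split; pf.
by c5 k; rewrite /alt /P /Q /=; split; pf.
Qed.

Lemma cross_sel k b (q : pt R 4 0) : S_ab al be q ->
  cross (Fpair k q) (Tm (sel k b q).1 (sel k b q).2) = 0.
Proof.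
move=> hS; have ha := alt_cross k q hS.
rewrite /Fpair /sel; case: ifP => _; case: b => /=; apply: crossTT => //.
- by rewrite mulrC.
- by rewrite mulrC -ha mulrC.
- by rewrite mulrC.
Qed.

Lemma F_morph : morphism (S_ab al be) (W_ab al be) F.
Proof.
split; [|split].
- by move=> p _ hS; split; [apply: F_valid | apply: F_W].
- move=> p q _ _ [lam [_ ->]]; exact: same_refl.
- move=> p _ hS.
  pose tb k := (p.1 0 - cx k != 0) || (p.1 2 - cu k != 0).
  exists (fun _ => 0%N), (fun _ => 1), (fun j q => (F q).1 j), (fun _ _ => 0%N),
    (fun k q => (Tm (sel k (tb k) q).1 (sel k (tb k) q).2).1),
    (fun k q => (Tm (sel k (tb k) q).1 (sel k (tb k) q).2).2).
  split; first by apply: mh0; apply: pf_const.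
  split; first by apply/eqP; rewrite oner_eq0.
  split.
    move=> j; apply: mh0; rewrite /F /mkpt /=; case: (val j == 0%N); pf.
  split; first by move=> k; split; apply: mh0; have [] := pf_sel k (tb k).
  split.
    move=> k; apply: nzp_Tm; rewrite /sel /tb; case: ifP => [/orP h|/negbT].
      by case: h => /eqP h; [left|right].
    rewrite negb_or !negbK !subr_eq0 => /andP[/eqP e1 /eqP e2].
    by case: (alt_nz k p e1 e2) => h; [left|right].
  move=> q _ hSq _ hnz; apply: same_intro => //=.
  + by apply: functional_extensionality => j; rewrite divr1.
  + by move=> k; apply: Fpair_nz.
  + by move=> k; apply: cross_sel.
Qed.

Lemma F2 p k : (F p).2 k = Fpair k p. Proof. by []. Qed.

Lemma GF p : S_ab al be p -> same (G (F p)) p.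
Proof.
move=> hS; have [e1 e2 e3] := Sx p hS.
apply: same_intro; [|by case|by case|by case].
apply: ord4 => /=.
- by rewrite xc_mk.
- rewrite /yG xc_mk uc_mk; case: (eqVneq (p.1 2) 0) => [u0|u0] /=.
    have hr : cx (kx (p.1 0)) = p.1 0 by apply: kx_root; rewrite -e1 u0 mulr0.
    rewrite Fpair_alt ?u0 ?kx_cu // sg0T sg1T alt_kx /=.
    by field; rewrite kx_nz.
  by rewrite -e1 mulfK.
- by rewrite uc_mk.
- rewrite /vG xc_mk uc_mk; case: (eqVneq (p.1 0) 0) => [x0|x0] /=.
    have hr : cu (ku (p.1 2)) = p.1 2 by apply: ku_root; rewrite -e2 x0 mul0r.
    have ha := alt_ku_nz p hS x0 hr.
    rewrite Fpair_alt ?x0 ?ku_cx // sg0T sg1T.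
    move: ha e3; rewrite /alt; case: (ku_cases (p.1 2)) => [[u0 ->]|[[u1 ->]|[_ [_ ->]]]] /= ha e3.
    + apply: (mulfI ha); rewrite e3 x0 u0 /P /Q /=; field.
      by rewrite ha.
    + by field; rewrite ha.
    + by field; rewrite ha.
  by rewrite -e2; field; rewrite x0.
Qed.

Lemma alt_cu0 k (p : pt R 4 0) : cu k = 0 -> alt k p = (p.1 1, P k (p.1 0)).
Proof. by c5 k; rewrite /cu /alt //= => /eqP; rewrite ?oner_eq0 ?(negbTE be0). Qed.
Lemma alt_cun0 k (p : pt R 4 0) : cu k != 0 -> cx k = 0 /\ alt k p = (Q k (p.1 2), p.1 3).
Proof. by c5 k; rewrite /cu /cx /alt //= eqxx. Qed.

Lemma FG q : W_ab al be q -> same (F (G q)) q.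
Proof.
move=> /Wp_W [bq n1 n2]; have [vq bq'] := (iffLR (Bl_sig q)) bq.
apply: same_intro => //.
- by rewrite [q.1](w1_mk q (fun _ => (0, 0))).
- exact: F_valid.
- move=> k; rewrite F2; have gx : (G q).1 0 = xc q by [].
  have gu : (G q).1 2 = uc q by [].
  rewrite /Fpair gx gu; case: ifP => [_|/negbT].
    by apply: crossT; rewrite bq'.
  rewrite negb_or !negbK !subr_eq0 => /andP[/eqP e1 /eqP e2].
  apply: crossT.
  case: (eqVneq (cu k) 0) => ck.
    rewrite alt_cu0 //= ?gx.
    have u0 : uc q = 0 by rewrite e2.
    have hk : kx (xc q) = k by rewrite e1 kx_cx.
    have [_ s1] := W1 q bq n1 u0; rewrite hk in s1.
    rewrite ?(_ : (G q).1 1 = yG q) //.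
    rewrite /yG u0 eqxx /= hk; field; by rewrite s1.
  have [cx0 ->] := alt_cun0 k (G q) ck; rewrite /= ?gu.
  have x0 : xc q = 0 by rewrite e1.
  have hk : ku (uc q) = k by rewrite e2 ku_cu.
  have [_ s0] := W2 q bq n2 x0; rewrite hk in s0.
  rewrite ?(_ : (G q).1 3 = vG q) //.
  rewrite /vG x0 eqxx /= hk; field; by rewrite s0.
Qed.

End Main.

Theorem lemma3p5 (R : realType) (alpha beta : CC R) :
  alpha <> 0 -> alpha <> 1 -> beta <> 0 -> beta <> 1 ->
  exists F : pt R 4 0 -> pt R 2 5,
    isomorphism (S_ab alpha beta) (W_ab alpha beta) F /\
    (forall p, S_ab alpha beta p -> blowdown (F p) = nu_ab p).
Proof.
move=> /eqP a0 /eqP a1 /eqP b0 /eqP b1.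
exists (@F _ alpha beta); split; last by [].
split; first by apply: F_morph.
exists (@G _ alpha beta); split.
- by apply: G_morph.
- by move=> p _ hS; apply: GF.
- by move=> q _ hW; apply: FG.
Qed.
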